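(* Let $0<r^0<r^1$. There exists $\sigma_0\in(0,1)$ such that, for given $\gamma>1$, $p_b^+(r_b)>0$, $\rho_b^+(r_b)>0$ and $t(r_b)=(M_b^+)^2(r_b)\in(0,\sigma_0)$, there exists $r_*\in(r^0,r^1)$ so that the background solution determined by $\gamma$, $r_b\in(r_*,r^1)$, $p_b^+(r_b)$, $\rho_b^+(r_b)$ and $t(r_b)$ satisfies the S-Condition.
   Context: Radial flows $U=(p,\rho,u^0\partial_r)$ of a polytropic gas ($c^2=\gamma p/\rho$) satisfy $\frac{du^0}{dr}=\frac{2c^2u^0}{r((u^0)^2-c^2)}$, $\frac{d\rho}{dr}=-\frac{2\rho(u^0)^2}{r((u^0)^2-c^2)}$, $\frac{dp}{dr}=-\frac{2\rho c^2(u^0)^2}{r((u^0)^2-c^2)}$. The (subsonic part $U_b^+$ of the) background solution determined by $(\gamma,r_b,p_b^+(r_b),\rho_b^+(r_b),t(r_b))$, with $r_b\in(r^0,r^1)$, $t(r_b)\in(0,1)$, is the radial solution on $[r_b,r^1]$ with $p=p_b^+(r_b)$, $\rho=\rho_b^+(r_b)$, $(u^0)^2=t(r_b)c^2>0$ at $r=r_b$; it is subsonic, $M_b^+=(u^0)_b^+/c_b^+$ and $t(r)=(M_b^+)^2(r)$. S-Condition. Put $t_s=t(r_b)$ and (quantities evaluated at $r_b$) $\mu_0=\frac{\gamma+1}{2}\frac{((u^0)_b^+)^2}{(c^2-(u^0)^2)_b^+}$, $\mu_2=-\frac{4\rho_b^+}{(\gamma+1)r_b}((\gamma-1)(u^0)^2+c^2)_b^+$,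 $\mu_5=\frac{r_b^2((u^0)^2-c^2)_b^+}{\gamma p_b^+(u^0)_b^+}$, $\mu_6=\frac{8\gamma(u^0)_b^+(r_b)}{(\gamma+1)(1-t_s)}((\gamma-1)t_s^2+t_s+1)$, $\mu_7=-\mu_0\mu_6$, $\mu_9=-\mu_0\mu_2\mu_5$. With $t=t(r)$ define $e_1=r^2(1-t)$, $e_2=\frac{2r}{1-t}((1+2\gamma)t^2-3t+4)$, $e_3=\frac{-2}{(t-1)^3}(6-19t-7t^2(\gamma-2)+t^4\gamma(1+2\gamma)+t^3(-3+2\gamma-4\gamma^2))$, $e_4=\frac{1-t_s}{(\rho_b^+(r_b))^\gamma(1+(\gamma-1)t_s)}\cdot\frac{2(\rho_b^+(r))^\gamma(2+(\gamma-1)t)}{(1-t)^3}((2\gamma-3)t^2+8t-3)$. For $\lambda_n=n(n+1)$, $n\ge0$, consider on $y\in[0,1]$, with $e_i$ evaluated at $r=(r^1-r_b)y+r_b$: $e_1v''+(r^1-r_b)e_2v'+(r^1-r_b)^2(e_3-\lambda_n)v=-(r^1-r_b)^2e_4$, $v(0)=1$, $v(1)=0$, $v'(0)=-\frac{\lambda_n+\mu_7}{\mu_9}(r^1-r_b)$. The background solution satisfies the S-Condition if for every $n\ge0$ this problem has no solution. *)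

(* Defs.v *)
From Stdlib Require Import Reals Lra.
Open Scope R_scope.

Definition deriv_on (a b : R) (f f' : R -> R) : Prop :=
  forall x, a <= x <= b -> forall eps, 0 < eps ->
    exists delta, 0 < delta /\
      forall h, h <> 0 -> Rabs h < delta -> a <= x + h <= b ->
        Rabs ((f (x + h) - f x) / h - f' x) < eps.

Definition csq (gam pr rho : R) : R := gam * pr / rho.

(* (p, rho, u^0) on [rb, r1] is the (subsonic part of the) background solution
   determined by (gam, rb, pb, rhob, ts): a classical solution of the radial
   ODE system with p = pb, rho = rhob, (u^0)^2 = ts c^2, u^0 > 0 at r = rb. *)
Definition background_solution (gam rb r1 pb rhob ts : R)
  (p rho u : R -> R) : Prop :=
  exists p' rho' u' : R -> R,
    deriv_on rb r1 p p' /\ deriv_on rb r1 rho rho' /\ deriv_on rb r1 u u' /\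
    (forall r, rb <= r <= r1 ->
       let c2 := csq gam (p r) (rho r) in
       0 < p r /\ 0 < rho r /\ u r ^ 2 - c2 <> 0 /\
       u' r = 2 * c2 * u r / (r * (u r ^ 2 - c2)) /\
       rho' r = - (2 * rho r * u r ^ 2) / (r * (u r ^ 2 - c2)) /\
       p' r = - (2 * rho r * c2 * u r ^ 2) / (r * (u r ^ 2 - c2))) /\
    p rb = pb /\ rho rb = rhob /\ 0 < u rb /\
    u rb ^ 2 = ts * csq gam (p rb) (rho rb).

Definition tfun (gam : R) (p rho u : R -> R) (r : R) : R :=
  u r ^ 2 / csq gam (p r) (rho r).

Section Coeffs.
Variables (gam rb r1 ts : R) (p rho u : R -> R).

Let u0 := u rb.
Let c2b := csq gam (p rb) (rho rb).
Let pb := p rb.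
Let rhob := rho rb.

Definition mu0 : R := (gam + 1) / 2 * (u0 ^ 2 / (c2b - u0 ^ 2)).
Definition mu2 : R :=
  - (4 * rhob / ((gam + 1) * rb)) * ((gam - 1) * u0 ^ 2 + c2b).
Definition mu5 : R := rb ^ 2 * (u0 ^ 2 - c2b) / (gam * pb * u0).
Definition mu6 : R :=
  8 * gam * u0 / ((gam + 1) * (1 - ts)) * ((gam - 1) * ts ^ 2 + ts + 1).
Definition mu7 : R := - mu0 * mu6.
Definition mu9 : R := - mu0 * mu2 * mu5.

Definition e1 (r : R) : R :=
  let t := tfun gam p rho u r in r ^ 2 * (1 - t).
Definition e2 (r : R) : R :=
  let t := tfun gam p rho u r in
  2 * r / (1 - t) * ((1 + 2 * gam) * t ^ 2 - 3 * t + 4).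
Definition e3 (r : R) : R :=
  let t := tfun gam p rho u r in
  -2 / (t - 1) ^ 3 *
  (6 - 19 * t - 7 * t ^ 2 * (gam - 2) + t ^ 4 * gam * (1 + 2 * gam)
   + t ^ 3 * (-3 + 2 * gam - 4 * gam ^ 2)).
Definition e4 (r : R) : R :=
  let t := tfun gam p rho u r in
  (1 - ts) / (Rpower rhob gam * (1 + (gam - 1) * ts)) *
  (2 * Rpower (rho r) gam * (2 + (gam - 1) * t) / (1 - t) ^ 3 *
   ((2 * gam - 3) * t ^ 2 + 8 * t - 3)).

End Coeffs.

Definition lam (n : nat) : R := INR n * (INR n + 1).

Definition S_condition (gam rb r1 ts : R) (p rho u : R -> R) : Prop :=
  let L := r1 - rb in
  let E1 := e1 gam p rho u in
  let E2 := e2 gam p rho u in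
  let E3 := e3 gam p rho u in
  let E4 := e4 gam rb ts p rho u in
  forall n : nat,
    ~ (exists v v1 v2 : R -> R,
         deriv_on 0 1 v v1 /\ deriv_on 0 1 v1 v2 /\
         (forall y, 0 <= y <= 1 ->
            let r := L * y + rb in
            E1 r * v2 y + L * E2 r * v1 y + L ^ 2 * (E3 r - lam n) * v y
            = - L ^ 2 * E4 r) /\
         v 0 = 1 /\ v 1 = 0 /\
         v1 0 = - ((lam n + mu7 gam rb ts p rho u)
                   / mu9 gam rb p rho u) * L).

(* Main.v *)
Require Import Defs.
From Stdlib Require Import Reals Lra.
Open Scope R_scope.

Definition Dx (a b x : R) : R -> Prop := fun h => h <> 0 /\ a <= x + h <= b.
Definition Qt (f : R -> R) (x h : R) : R := (f (x + h) - f x) / h.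

Lemma deriv_lim a b f f' :
  deriv_on a b f f' <-> forall x, a <= x <= b -> limit1_in (Qt f x) (Dx a b x) (f' x) 0.
Proof.
  unfold deriv_on, limit1_in, limit_in, Dx, Qt; simpl; unfold R_dist; split.
  - intros H x Hx eps Heps. destruct (H x Hx eps Heps) as [d [Hd Hd']].
    exists d; split; [lra|]. intros h [[Hh0 Hh1] Hh2]. apply Hd'; auto.
    rewrite Rminus_0_r in Hh2; exact Hh2.
  - intros H x Hx eps Heps. destruct (H x Hx eps Heps) as [d [Hd Hd']].
    exists d; split; [lra|]. intros h Hh0 Hh1 Hh2. apply Hd'. rewrite Rminus_0_r. auto.
Qed.

Lemma limit_ext F G D l x0 : (forall h, D h -> F h = G h) -> limit1_in F D l x0 -> limit1_in G D l x0.
Proof.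
  unfold limit1_in, limit_in; intros E H eps He. destruct (H eps He) as [d [Hd H']].
  exists d; split; auto. intros x [Dh Hx]. rewrite <- E by auto. apply H'; auto.
Qed.

Lemma limit_id D : limit1_in (fun h => h) D 0 0.
Proof. unfold limit1_in, limit_in; intros eps He; exists eps; split; auto. intros x [_ H]; exact H. Qed.

Lemma limit_cst D c : limit1_in (fun _ => c) D c 0.
Proof. exact (limit_free (fun _ => c) D 0 0). Qed.

Lemma limit_shift a b f f' x : deriv_on a b f f' -> a <= x <= b ->
  limit1_in (fun h => f (x+h)) (Dx a b x) (f x) 0.
Proof.
  intros Hd Hx. rewrite deriv_lim in Hd. specialize (Hd x Hx).
  assert (H1 := limit_mul _ _ _ _ _ _ (limit_id (Dx a b x)) Hd).
  assert (H2 := limit_plus _ _ _ _ _ _ (limit_cst (Dx a b x) (f x)) H1).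
  enough (HH : limit1_in (fun h => f (x+h)) (Dx a b x) (f x + 0 * f' x) 0)
    by (rewrite Rmult_0_l, Rplus_0_r in HH; exact HH).
  refine (limit_ext _ _ _ _ _ _ H2); intros h Hh; cbv beta.
  destruct Hh as [Hh _]. unfold Qt. field. auto.
Qed.

Lemma deriv_mul a b f f' g g' : deriv_on a b f f' -> deriv_on a b g g' ->
  deriv_on a b (fun x => f x * g x) (fun x => f' x * g x + f x * g' x).
Proof.
  intros Hf Hg. apply deriv_lim. intros x Hx.
  pose proof (limit_shift _ _ _ _ x Hf Hx) as Hs.
  rewrite deriv_lim in Hf, Hg. specialize (Hf x Hx). specialize (Hg x Hx).
  assert (H := limit_plus _ _ _ _ _ _ (limit_mul _ _ _ _ _ _ Hs Hg)
     (limit_mul _ _ _ _ _ _ (limit_cst (Dx a b x) (g x)) Hf)).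
  replace (f' x * g x + f x * g' x) with (f x * g' x + g x * f' x) by ring.
  refine (limit_ext _ _ _ _ _ _ H); intros h Hh; cbv beta. destruct Hh as [Hh _]. unfold Qt. field. auto.
Qed.

Lemma deriv_lin a b f f' g g' c : deriv_on a b f f' -> deriv_on a b g g' ->
  deriv_on a b (fun x => f x + c * g x) (fun x => f' x + c * g' x).
Proof.
  intros Hf Hg. apply deriv_lim. intros x Hx.
  rewrite deriv_lim in Hf, Hg. specialize (Hf x Hx). specialize (Hg x Hx).
  assert (H := limit_plus _ _ _ _ _ _ Hf (limit_mul _ _ _ _ _ _ (limit_cst (Dx a b x) c) Hg)).
  refine (limit_ext _ _ _ _ _ _ H); intros h Hh; cbv beta. destruct Hh as [Hh _]. unfold Qt. field. auto.
Qed.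

Lemma deriv_id a b : deriv_on a b (fun x => x) (fun _ => 1).
Proof.
  apply deriv_lim. intros x Hx.
  refine (limit_ext _ _ _ _ _ _ (limit_cst (Dx a b x) 1)); intros h Hh; cbv beta.
  destruct Hh as [Hh _]. unfold Qt. field. auto.
Qed.

Lemma deriv_cst a b c : deriv_on a b (fun _ => c) (fun _ => 0).
Proof.
  apply deriv_lim. intros x Hx.
  refine (limit_ext _ _ _ _ _ _ (limit_cst (Dx a b x) 0)); intros h Hh; cbv beta.
  destruct Hh as [Hh _]. unfold Qt. field. auto.
Qed.

Lemma deriv_restrict a b a' b' f f' : deriv_on a b f f' -> a <= a' -> b' <= b ->
  deriv_on a' b' f f'.
Proof.
  intros H Ha Hb x Hx eps He. destruct (H x ltac:(lra) eps He) as [d [Hd H']].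
  exists d; split; auto. intros h H1 H2 H3. apply H'; auto; lra.
Qed.

Definition cont_on (a b : R) (f : R -> R) : Prop :=
  forall x, a <= x <= b -> forall eps, 0 < eps -> exists delta, 0 < delta /\
    forall y, a <= y <= b -> Rabs (y - x) < delta -> Rabs (f y - f x) < eps.

Lemma deriv_cont a b f f' : deriv_on a b f f' -> cont_on a b f.
Proof.
  intros Hd x Hx eps He. pose proof (limit_shift _ _ _ _ x Hd Hx) as H.
  unfold limit1_in, limit_in in H; simpl in H; unfold R_dist in H.
  destruct (H eps He) as [d [Hd0 Hd1]]. exists d; split; [lra|].
  intros y Hy Hyx. destruct (Req_dec y x) as [->|Hne].
  - unfold Rminus; rewrite Rplus_opp_r, Rabs_R0; lra.
  - replace y with (x + (y - x)) by ring. apply Hd1. split. split. lra.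
    replace (x + (y-x)) with y by ring; lra. rewrite Rminus_0_r; auto.
Qed.

Lemma cont_abs a b f : cont_on a b f -> cont_on a b (fun x => Rabs (f x)).
Proof.
  intros H x Hx eps He. destruct (H x Hx eps He) as [d [Hd H']]. exists d; split; auto.
  intros y Hy Hyx. eapply Rle_lt_trans. apply Rabs_triang_inv2. auto.
Qed.

Lemma cont_opp a b f : cont_on a b f -> cont_on a b (fun x => - f x).
Proof.
  intros H x Hx eps He. destruct (H x Hx eps He) as [d [Hd H']]. exists d; split; auto.
  intros y Hy Hyx. replace (- f y - - f x) with (- (f y - f x)) by ring. rewrite Rabs_Ropp. auto.
Qed.

Lemma first_hit a b f M : a <= b -> cont_on a b f -> f a < M ->
  (exists x0, a <= x0 <= b /\ M <= f x0) ->
  exists c, a < c <= b /\ f c = M /\ forall s, a <= s < c -> f s < M.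
Proof.
  intros Hab Hc Ha [x0 [Hx0 Hfx0]].
  set (E := fun y => a <= - y <= b /\ M <= f (- y)).
  assert (HB : bound E). { exists (- a). intros y [Hy _]. lra. }
  assert (HE : exists y, E y). { exists (- x0). unfold E. rewrite Ropp_involutive. split; [lra|auto]. }
  destruct (completeness E HB HE) as [m [Hub Hlub]].
  set (c := - m).
  assert (c1 : c <= x0). { assert (E (- x0)) by (unfold E; rewrite Ropp_involutive; split; [lra|auto]).
    specialize (Hub _ H). unfold c; lra. }
  assert (c2 : a <= c). { assert (m <= - a). { apply Hlub. intros y [Hy _]. lra. } unfold c; lra. }
  assert (c3 : forall s, a <= s < c -> f s < M).
  { intros s Hs. destruct (Rlt_or_le (f s) M) as [|Hge]; auto. exfalso.
    assert (E (- s)) by (unfold E; rewrite Ropp_involutive; split; [lra|auto]).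
    specialize (Hub _ H). unfold c in Hs; lra. }
  assert (c4 : M <= f c).
  { destruct (Rlt_or_le (f c) M) as [Hlt|]; auto. exfalso.
    destruct (Hc c ltac:(lra) (M - f c) ltac:(lra)) as [d [Hd Hd']].
    assert (m <= m - d). { apply Hlub. intros y [Hy Hfy].
      destruct (Rlt_or_le (- y) c) as [Hl|Hl].
      - specialize (c3 (- y) ltac:(lra)); lra.
      - destruct (Rlt_or_le (- y) (c + d)) as [Hl2|Hl2].
        + assert (Rabs (- y - c) < d) by (rewrite Rabs_right; lra).
          specialize (Hd' _ Hy H). assert (f (-y) - f c <= Rabs (f (-y) - f c)) by apply Rle_abs. lra.
        + unfold c in Hl2; lra. }
    lra. }
  assert (c5 : a < c). { destruct (Req_dec a c) as [E'|]; [|lra]. rewrite <- E' in c4. lra. }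
  assert (c6 : f c <= M).
  { destruct (Rlt_or_le M (f c)) as [Hlt|]; auto. exfalso.
    destruct (Hc c ltac:(lra) (f c - M) ltac:(lra)) as [d [Hd Hd']].
    set (s := Rmax a (c - d / 2)).
    assert (Hs1 : a <= s) by apply Rmax_l. assert (Hs2 : c - d/2 <= s) by apply Rmax_r.
    assert (Hs3 : s < c). { unfold s; apply Rmax_lub_lt; lra. }
    assert (Rabs (s - c) < d) by (rewrite Rabs_left; lra).
    specialize (Hd' s ltac:(lra) H). specialize (c3 s ltac:(lra)).
    assert (- (f s - f c) <= Rabs (f s - f c)) by (rewrite <- Rabs_Ropp; apply Rle_abs). lra. }
  exists c. split; [lra|]. split; [lra|]. exact c3.
Qed.

Lemma left_max a b f f' c : deriv_on a b f f' -> a < c <= b ->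
  (forall s, a <= s < c -> f s <= f c) -> 0 <= f' c.
Proof.
  intros Hd Hc Hs. destruct (Rle_or_lt 0 (f' c)) as [|Hneg]; auto. exfalso.
  destruct (Hd c ltac:(lra) (- f' c) ltac:(lra)) as [d [Hd0 Hd1]].
  assert (Hm1 : Rmin d (c-a) <= d) by apply Rmin_l.
  assert (Hm2 : Rmin d (c-a) <= c - a) by apply Rmin_r.
  assert (Hm3 : 0 < Rmin d (c-a)) by (apply Rmin_glb_lt; lra).
  set (h := - (Rmin d (c - a) / 2)).
  assert (Hh : h < 0) by (unfold h; lra).
  assert (Hha : Rabs h < d) by (rewrite Rabs_left; unfold h; lra).
  specialize (Hd1 h ltac:(lra) Hha ltac:(unfold h; lra)).
  specialize (Hs (c + h) ltac:(unfold h; lra)).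
  assert (Q : 0 <= (f (c + h) - f c) / h).
  { replace ((f (c + h) - f c) / h) with ((f c - f (c + h)) / (- h)) by (field; lra).
    apply Rmult_le_pos; [lra|]. left; apply Rinv_0_lt_compat; lra. }
  assert ((f (c + h) - f c) / h - f' c <= Rabs ((f (c + h) - f c) / h - f' c)) by apply Rle_abs.
  lra.
Qed.

Lemma mvi_up a b f f' K : deriv_on a b f f' -> (forall x, a <= x <= b -> f' x <= K) ->
  forall x, a <= x <= b -> f x - f a <= K * (x - a).
Proof.
  intros Hd HK x Hx. destruct (Rle_or_lt (f x - f a) (K * (x - a))) as [|Hgt]; auto. exfalso.
  set (d := f x - f a - K * (x - a)).
  assert (Hxa : a < x). { destruct (Req_dec a x) as [E|]; [|lra]. subst x. unfold d in *. lra. }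
  set (e := d / (x - a + 1)).
  assert (He : 0 < e) by (unfold e, d; apply Rdiv_lt_0_compat; lra).
  set (g := fun y => (f y + (- (K + e)) * y) + 1 * ((K + e) * a - f a)).
  assert (Hg : deriv_on a b g (fun y => (f' y + (- (K + e)) * 1) + 1 * 0)).
  { apply (deriv_lin a b (fun y => f y + (- (K + e)) * y) _ (fun _ => (K + e) * a - f a) (fun _ => 0) 1).
    apply deriv_lin; auto. apply deriv_id. apply deriv_cst. }
  assert (Hga : g a = 0) by (unfold g; ring).
  assert (Hgx : g x = d / (x - a + 1)) by (unfold g, e, d; field; lra).
  destruct (first_hit a b g (g x) ltac:(lra) (deriv_cont _ _ _ _ Hg)) as [c [Hc [Hgc Hs]]].
  { rewrite Hga, Hgx. apply Rdiv_lt_0_compat; unfold d; lra. }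
  { exists x; split; auto; lra. }
  assert (H0 := left_max a b g _ c Hg Hc ltac:(intros s Hs'; specialize (Hs s Hs'); lra)).
  specialize (HK c ltac:(lra)). cbv beta in H0. lra.
Qed.

Lemma mvi_low a b f f' K : deriv_on a b f f' -> (forall x, a <= x <= b -> K <= f' x) ->
  forall x, a <= x <= b -> K * (x - a) <= f x - f a.
Proof.
  intros Hd HK x Hx.
  assert (Hd' : deriv_on a b (fun y => 0 + (-1) * f y) (fun y => 0 + (-1) * f' y)).
  { apply deriv_lin; auto. apply deriv_cst. }
  pose proof (mvi_up a b _ _ (- K) Hd' ltac:(intros y Hy; specialize (HK y Hy); lra) x Hx).
  cbv beta in H. lra.
Qed.

Lemma div_neg_le a b : 0 <= a -> b < 0 -> a / b <= 0.
Proof. intros Ha Hb. unfold Rdiv. assert (/ b < 0) by (apply Rinv_lt_0_compat; lra). nra. Qed.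

Lemma bg_bounds r0 r1 gam rb pb rhob ts p rho u :
  0 < r0 <= rb -> rb < r1 -> r1 - rb < r0 / 4 -> 1 < gam -> 0 < pb -> 0 < rhob ->
  0 < ts <= 1/2 ->
  background_solution gam rb r1 pb rhob ts p rho u ->
  forall r, rb <= r <= r1 -> 0 <= tfun gam p rho u r <= ts /\ 0 < rho r <= 2 * rhob.
Proof.
  intros Hr0 Hr1 HL Hg Hpb Hrhob Hts
    [p' [rho' [u' [Hp [Hrho [Hu [Hode [Hpb' [Hrhob' [Hu0 Hu0sq]]]]]]]]]].
  assert (Hrr : forall r, rb <= r <= r1 -> 0 < r) by (intros; lra).
  assert (Hc2 : forall r, rb <= r <= r1 -> 0 < csq gam (p r) (rho r)).
  { intros r Hr. destruct (Hode r Hr) as [H1 [H2 _]]. unfold csq.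
    apply Rdiv_lt_0_compat; [apply Rmult_lt_0_compat|]; lra. }
  pose proof (deriv_lin rb r1 (fun r => rho r * (u r * u r)) _ p p' (- gam)
     (deriv_mul rb r1 rho rho' (fun r => u r * u r) _ Hrho (deriv_mul rb r1 u u' u u' Hu Hu)) Hp) as HE.
  cbv beta in HE.
  set (E := fun r => rho r * (u r * u r) + - gam * p r) in HE.
  assert (HEr : forall r, rb <= r <= r1 -> E r = rho r * (u r ^ 2 - csq gam (p r) (rho r))).
  { intros r Hr. destruct (Hode r Hr) as [H1 [H2 _]]. unfold E, csq. field. lra. }
  assert (HEneg : forall r, rb <= r <= r1 -> E r < 0).
  { assert (HE0 : E rb < 0).
    { unfold E. rewrite Hpb', Hrhob'. replace (u rb * u rb) with (u rb ^ 2) by ring.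
      rewrite Hu0sq, Hpb', Hrhob'. unfold csq. field_simplify; [|lra].
      assert (0 < gam * pb) by (apply Rmult_lt_0_compat; lra). nra. }
    intros r Hr. destruct (Rlt_or_le (E r) 0) as [|Hge]; auto. exfalso.
    destruct (first_hit rb r1 E 0 ltac:(lra) (deriv_cont _ _ _ _ HE) HE0) as [c [Hc [HEc _]]].
    { exists r; split; auto. }
    rewrite HEr in HEc by lra. destruct (Hode c ltac:(lra)) as [H1 [H2 [H3 _]]].
    apply Rmult_integral in HEc. destruct HEc; [lra|auto]. }
  assert (HD : forall r, rb <= r <= r1 -> u r ^ 2 - csq gam (p r) (rho r) < 0).
  { intros r Hr. specialize (HEneg r Hr). rewrite HEr in HEneg by auto.
    destruct (Hode r Hr) as [H1 [H2 _]]. nra. }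
  pose proof (deriv_lin rb r1 (fun r => rho r * (u r * u r)) _ p p' (- (ts * gam))
     (deriv_mul rb r1 rho rho' (fun r => u r * u r) _ Hrho (deriv_mul rb r1 u u' u u' Hu Hu)) Hp) as Hh.
  cbv beta in Hh.
  assert (Hh0 : forall r, rb <= r <= r1 -> rho r * (u r * u r) + - (ts * gam) * p r <= 0).
  { intros r Hr.
    pose proof (mvi_up _ _ _ _ 0 Hh) as M. cbv beta in M.
    assert (Hhrb : rho rb * (u rb * u rb) + - (ts * gam) * p rb = 0).
    { replace (u rb * u rb) with (u rb ^ 2) by ring. rewrite Hu0sq, Hpb', Hrhob'. unfold csq. field. lra. }
    enough (Hder : forall x, rb <= x <= r1 -> rho' x * (u x * u x) + rho x * (u' x * u x + u x * u' x) +
   - (ts * gam) * p' x <= 0) by (pose proof (M Hder r Hr) as M'; rewrite Hhrb in M'; lra).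
    intros x Hx. destruct (Hode x Hx) as [H1 [H2 [H3 [H4 [H5 H6]]]]].
    cbv zeta in H4, H5, H6. rewrite H4, H5, H6.
    specialize (HD x Hx). specialize (Hc2 x Hx). specialize (Hrr x Hx).
    set (c2 := csq gam (p x) (rho x)) in *.
    replace (- (2 * rho x * u x ^ 2) / (x * (u x ^ 2 - c2)) * (u x * u x) +
      rho x * (2 * c2 * u x / (x * (u x ^ 2 - c2)) * u x + u x * (2 * c2 * u x / (x * (u x ^ 2 - c2)))) +
      - (ts * gam) * (- (2 * rho x * c2 * u x ^ 2) / (x * (u x ^ 2 - c2))))
      with ((2 * rho x * u x ^ 2) / (x * (u x ^ 2 - c2)) * (2 * c2 - u x ^ 2 + ts * gam * c2))
      by (field; lra).
    assert ((2 * rho x * u x ^ 2) / (x * (u x ^ 2 - c2)) <= 0).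
    { apply div_neg_le; [|nra]. assert (0 <= u x ^ 2) by nra. nra. }
    assert (0 <= 2 * c2 - u x ^ 2 + ts * gam * c2).
    { assert (0 <= ts * gam * c2) by (apply Rmult_le_pos; [nra|lra]). lra. }
    nra. }
  assert (Ht : forall r, rb <= r <= r1 -> 0 <= tfun gam p rho u r <= ts).
  { intros r Hr. specialize (Hh0 r Hr). destruct (Hode r Hr) as [H1 [H2 _]].
    unfold tfun, csq. split.
    - unfold Rdiv. apply Rmult_le_pos; [nra|]. left; apply Rinv_0_lt_compat.
      apply Rdiv_lt_0_compat; [apply Rmult_lt_0_compat|]; lra.
    - replace (u r ^ 2 / (gam * p r / rho r)) with ((rho r * (u r * u r)) * / (gam * p r))
        by (field; lra).
      assert (0 < gam * p r) by (apply Rmult_lt_0_compat; lra).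
      apply Rle_trans with ((ts * gam * p r) * / (gam * p r)).
      + apply Rmult_le_compat_r; [left; apply Rinv_0_lt_compat; auto|lra].
      + right; field; lra. }
  assert (Hrho' : forall r, rb <= r <= r1 -> rho r <= 2 * rhob -> rho' r <= 4 * rhob / r0).
  { intros r Hr Hle. destruct (Hode r Hr) as [H1 [H2 [H3 [H4 [H5 H6]]]]].
    cbv zeta in H5. rewrite H5. specialize (Ht r Hr). specialize (Hc2 r Hr). specialize (HD r Hr).
    unfold tfun in Ht. set (c2 := csq gam (p r) (rho r)) in *.
    assert (Hu2 : u r ^ 2 <= ts * c2).
    { destruct Ht as [_ Ht]. apply Rmult_le_compat_r with (r := c2) in Ht; [|lra].
      replace (u r ^ 2 / c2 * c2) with (u r ^ 2) in Ht by (field; lra). lra. }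
    set (w := c2 - u r ^ 2) in *.
    set (A := - (2 * rho r * u r ^ 2) / (r * (u r ^ 2 - c2))).
    assert (HA : A * (r * w) = 2 * rho r * u r ^ 2) by (unfold A, w; field; split; lra).
    assert (0 <= u r ^ 2) by nra.
    assert (A * r <= 4 * rhob).
    { apply Rmult_le_reg_r with w. unfold w; lra. rewrite Rmult_assoc, HA. unfold w.
      assert (u r ^ 2 <= c2 - u r ^ 2) by nra.
      assert (2 * rho r * u r ^ 2 <= 2 * rho r * (c2 - u r ^ 2)) by (apply Rmult_le_compat_l; lra).
      nra. }
    apply Rmult_le_reg_r with r0; [lra|]. unfold Rdiv. rewrite Rmult_assoc, Rinv_l by lra.
    destruct (Rle_or_lt A 0); nra. }
  intros r Hr. split; [auto|]. destruct (Hode r Hr) as [_ [H2 _]]. split; auto.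
  destruct (Rle_or_lt (rho r) (2 * rhob)) as [|Hgt]; auto. exfalso.
  destruct (first_hit rb r1 rho (2 * rhob) ltac:(lra) (deriv_cont _ _ _ _ Hrho) ltac:(lra))
    as [c [Hc [Hrc Hs]]].
  { exists r; split; [auto|lra]. }
  assert (M := mvi_up rb c rho rho' (4 * rhob / r0) (deriv_restrict rb r1 rb c rho rho' Hrho ltac:(lra) ltac:(lra))).
  specialize (M ltac:(intros x Hx; apply Hrho'; [lra|]; destruct (Req_dec x c) as [->|];
      [lra|specialize (Hs x ltac:(lra)); lra]) c ltac:(lra)).
  rewrite Hrhob', Hrc in M.
  assert (4 * rhob / r0 * (c - rb) < rhob).
  { apply Rlt_le_trans with (4 * rhob / r0 * (r0 / 4)).
    - apply Rmult_lt_compat_l. apply Rdiv_lt_0_compat; lra. lra.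
    - right; field; lra. }
  lra.
Qed.

Lemma abs_prod_le a b A B : Rabs a <= A -> Rabs b <= B -> Rabs (a * b) <= A * B.
Proof. intros. rewrite Rabs_mult. apply Rmult_le_compat; auto; apply Rabs_pos. Qed.

Lemma Rpower_pos' x y : 0 < Rpower x y.
Proof. unfold Rpower; apply exp_pos. Qed.

Lemma e2_bd g t r r1 : 1 < g -> 0 <= t <= 1/2 -> 0 < r <= r1 ->
  Rabs (2 * r / (1 - t) * ((1 + 2 * g) * t ^ 2 - 3 * t + 4)) <= 4 * r1 * (2 * g + 8).
Proof.
  intros Hg Ht Hr. apply abs_prod_le.
  - rewrite Rabs_right. 2:{ left; apply Rdiv_lt_0_compat; lra. }
    apply Rmult_le_reg_r with (1 - t); [lra|]. unfold Rdiv. rewrite Rmult_assoc, Rinv_l by lra.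
    nra.
  - assert (0 <= t ^ 2 <= 1) by nra.
    assert (0 <= (1 + 2 * g) * t ^ 2 <= 1 + 2 * g) by (split; nra).
    apply Rabs_le. split; nra.
Qed.

Lemma e3_bd g t : 1 < g -> 0 <= t <= 1/2 ->
  Rabs (-2 / (t - 1) ^ 3 *
  (6 - 19 * t - 7 * t ^ 2 * (g - 2) + t ^ 4 * g * (1 + 2 * g)
   + t ^ 3 * (-3 + 2 * g - 4 * g ^ 2))) <= 16 * (42 + 10 * g + 6 * g ^ 2).
Proof.
  intros Hg Ht. apply abs_prod_le.
  - replace (-2 / (t - 1) ^ 3) with (2 / (1 - t) ^ 3) by (field; lra).
    assert (H8 : 1/8 <= (1 - t) ^ 3) by nra.
    rewrite Rabs_right. 2:{ left; apply Rdiv_lt_0_compat; lra. }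
    apply Rmult_le_reg_r with ((1 - t) ^ 3); [lra|]. unfold Rdiv. rewrite Rmult_assoc, Rinv_l by lra.
    lra.
  - assert (0 <= t ^ 2 <= 1) by nra. assert (0 <= t ^ 3 <= 1) by nra. assert (0 <= t ^ 4 <= 1) by nra.
    apply Rabs_le. split; nra.
Qed.

Lemma e4_bd g t ts rhob rh : 1 < g -> 0 <= t <= 1/2 -> 0 < ts <= 1/2 -> 0 < rhob -> 0 < rh <= 2 * rhob ->
  Rabs ((1 - ts) / (Rpower rhob g * (1 + (g - 1) * ts)) *
  (2 * Rpower rh g * (2 + (g - 1) * t) / (1 - t) ^ 3 *
   ((2 * g - 3) * t ^ 2 + 8 * t - 3)))
  <= / Rpower rhob g * (16 * (2 + g) * Rpower (2 * rhob) g * (2 * g + 14)).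
Proof.
  intros Hg Ht Hts Hr Hrh. pose proof (Rpower_pos' rhob g). pose proof (Rpower_pos' rh g).
  pose proof (Rpower_pos' (2 * rhob) g).
  assert (Hle : Rpower rh g <= Rpower (2 * rhob) g) by (apply Rle_Rpower_l; lra).
  apply abs_prod_le.
  - rewrite Rabs_right.
    2:{ left; apply Rdiv_lt_0_compat; [lra|]. apply Rmult_lt_0_compat; [lra|nra]. }
    unfold Rdiv. rewrite Rinv_mult. rewrite (Rmult_comm (/ _)), <- Rmult_assoc.
    rewrite <- (Rmult_1_l (/ Rpower rhob g)) at 2. apply Rmult_le_compat_r.
    left; apply Rinv_0_lt_compat; lra.
    apply Rmult_le_reg_r with (1 + (g - 1) * ts); [nra|]. rewrite Rmult_assoc, Rinv_l by nra. nra.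
  - apply abs_prod_le.
    + assert (H8 : 1/8 <= (1 - t) ^ 3) by nra.
      rewrite Rabs_right.
      2:{ left; apply Rdiv_lt_0_compat; [|lra]. apply Rmult_lt_0_compat; [lra|nra]. }
      apply Rmult_le_reg_r with ((1 - t) ^ 3); [lra|]. unfold Rdiv. rewrite Rmult_assoc, Rinv_l by lra.
      assert (0 < 2 + (g - 1) * t <= 2 + g) by nra.
      assert (2 * Rpower rh g * (2 + (g - 1) * t) <= 2 * Rpower (2 * rhob) g * (2 + g)).
      { apply Rmult_le_compat; nra. }
      assert (0 < Rpower (2 * rhob) g * (2 + g)) by nra.
      assert (0 <= (Rpower (2 * rhob) g * (2 + g)) * ((1 - t) ^ 3 - 1/8)) by (apply Rmult_le_pos; lra).
      nra.
    + assert (0 <= t ^ 2 <= 1) by nra. assert (0 <= g * t ^ 2 <= g) by (split; nra).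
      apply Rabs_le. split; nra.
Qed.

Lemma abs_bounds x B : Rabs x <= B -> - B <= x <= B.
Proof. intros H. pose proof (Rle_abs x). pose proof (Rle_abs (- x)). rewrite Rabs_Ropp in H1. lra. Qed.

Lemma large_contra E1 E2 E3 E4 L lamv vc v2c B3 B4 :
  0 < L -> 0 < E1 -> Rabs E3 <= B3 -> Rabs E4 <= B4 -> B3 + B4 + 1 <= lamv ->
  1 <= vc -> v2c <= 0 ->
  E1 * v2c + L * E2 * 0 + L ^ 2 * (E3 - lamv) * vc = - L ^ 2 * E4 -> False.
Proof.
  intros HL HE1 H3 H4 Hl Hv Hv2 Heq.
  apply abs_bounds in H3. apply abs_bounds in H4.
  assert (E1 * v2c <= 0) by nra.
  assert (lamv - E3 <= (lamv - E3) * vc) by nra.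
  assert (0 < L ^ 2) by nra.
  assert (0 < L ^ 2 * ((lamv - E3) * vc - E4)) by (apply Rmult_lt_0_compat; lra).
  nra.
Qed.

Lemma v2_bound E1 E2 E3 E4 L lamv v v1 v2 B2 B3 B4 Lam r0 :
  0 < L <= 1 -> 0 < r0 -> r0 ^ 2 / 2 <= E1 -> Rabs E2 <= B2 -> Rabs E3 <= B3 -> Rabs E4 <= B4 ->
  0 <= lamv < Lam -> Rabs v <= 3/2 -> Rabs v1 <= 1/2 ->
  E1 * v2 + L * E2 * v1 + L ^ 2 * (E3 - lamv) * v = - L ^ 2 * E4 ->
  Rabs v2 <= L * (2 * (B4 + B2 / 2 + 3 / 2 * (B3 + Lam)) / r0 ^ 2).
Proof.
  intros HL Hr0 HE1 H2 H3 H4 Hl Hv Hv1 Heq.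
  assert (HB2 : 0 <= B2) by (eapply Rle_trans; [apply Rabs_pos|eauto]).
  assert (HB3 : 0 <= B3) by (eapply Rle_trans; [apply Rabs_pos|eauto]).
  assert (HB4 : 0 <= B4) by (eapply Rle_trans; [apply Rabs_pos|eauto]).
  assert (Hr2 : 0 < r0 ^ 2) by nra.
  assert (HE1p : 0 < E1) by lra.
  assert (E1 * v2 = - (L ^ 2 * E4) + - (L * E2 * v1) + - (L ^ 2 * (E3 - lamv) * v)) by lra.
  assert (H34 : Rabs (E3 - lamv) <= B3 + Lam).
  { eapply Rle_trans. apply Rabs_triang. rewrite Rabs_Ropp. rewrite (Rabs_right lamv) by lra. lra. }
  assert (Ha : Rabs (L ^ 2 * E4) <= L ^ 2 * B4).
  { rewrite Rabs_mult, (Rabs_right (L^2)) by nra. apply Rmult_le_compat_l; nra. }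
  assert (Hb : Rabs (L * E2 * v1) <= L * B2 * (1/2)).
  { apply abs_prod_le; auto. rewrite Rabs_mult, (Rabs_right L) by lra. apply Rmult_le_compat_l; lra. }
  assert (Hc : Rabs (L ^ 2 * (E3 - lamv) * v) <= L ^ 2 * (B3 + Lam) * (3/2)).
  { apply abs_prod_le; auto. rewrite Rabs_mult, (Rabs_right (L^2)) by nra. apply Rmult_le_compat_l; nra. }
  assert (Hsum : Rabs (E1 * v2) <= L * (B4 + B2 / 2 + 3 / 2 * (B3 + Lam))).
  { rewrite H. eapply Rle_trans. apply Rabs_triang. eapply Rle_trans.
    apply Rplus_le_compat_r. apply Rabs_triang. rewrite !Rabs_Ropp.
    assert (L ^ 2 <= L) by nra.
    assert (L ^ 2 * B4 <= L * B4) by nra.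
    assert (L ^ 2 * (B3 + Lam) <= L * (B3 + Lam)) by (apply Rmult_le_compat_r; lra).
    lra. }
  rewrite Rabs_mult, (Rabs_right E1) in Hsum by lra.
  set (N := B4 + B2 / 2 + 3 / 2 * (B3 + Lam)) in *.
  assert (0 <= N) by (unfold N; lra).
  assert (r0 ^ 2 / 2 * Rabs v2 <= L * N).
  { eapply Rle_trans; [|exact Hsum]. apply Rmult_le_compat_r; [apply Rabs_pos|lra]. }
  replace (L * (2 * N / r0 ^ 2)) with ((L * N) / (r0 ^ 2 / 2)) by (field; lra).
  apply Rmult_le_reg_r with (r0 ^ 2 / 2); [lra|].
  unfold Rdiv at 2. rewrite Rmult_assoc, Rinv_l by lra. lra.
Qed.

Theorem lemma2p7 :
  forall r0 r1 : R, 0 < r0 < r1 ->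
  exists sigma0 : R, 0 < sigma0 < 1 /\
    forall gam pb rhob ts : R,
      1 < gam -> 0 < pb -> 0 < rhob -> 0 < ts < sigma0 ->
      exists rstar : R, r0 < rstar < r1 /\
        forall rb : R, rstar < rb < r1 ->
          forall p rho u : R -> R,
            background_solution gam rb r1 pb rhob ts p rho u ->
            S_condition gam rb r1 ts p rho u.
Proof.
  intros r0 r1 Hr. exists (1/2). split; [lra|].
  intros g pb rhob ts Hg Hpb Hrhob Hts.
  set (c2b := csq g pb rhob).
  assert (Hc2b : 0 < c2b) by (unfold c2b, csq; apply Rdiv_lt_0_compat; [apply Rmult_lt_0_compat|]; lra).
  set (u0 := sqrt (ts * c2b)).
  assert (Hu0 : 0 < u0) by (apply sqrt_lt_R0; apply Rmult_lt_0_compat; lra).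
  assert (Hu0sq : u0 ^ 2 = ts * c2b) by (unfold u0; simpl; rewrite Rmult_1_r; apply sqrt_sqrt; nra).
  set (M7 := - ((g + 1) / 2 * (u0 ^ 2 / (c2b - u0 ^ 2))) *
     (8 * g * u0 / ((g + 1) * (1 - ts)) * ((g - 1) * ts ^ 2 + ts + 1))).
  set (A0 := 2 * ts * c2b * r0 / u0).
  assert (HA0 : 0 < A0). { unfold A0. apply Rdiv_lt_0_compat; [|lra]. assert (0 < ts * c2b) by nra. nra. }

  set (B2 := 4 * r1 * (2 * g + 8)).
  set (B3 := 16 * (42 + 10 * g + 6 * g ^ 2)).
  set (B4 := / Rpower rhob g * (16 * (2 + g) * Rpower (2 * rhob) g * (2 * g + 14))).
  set (Lam := B3 + B4 + 1 + Rabs M7).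
  set (N0 := B4 + B2 / 2 + 3 / 2 * (B3 + Lam)).
  set (K := 2 * N0 / r0 ^ 2).
  set (Cst := K + (Lam + Rabs M7) / A0).
  assert (HB2 : 0 <= B2) by (unfold B2; nra).
  assert (HB3 : 0 <= B3) by (unfold B3; nra).
  assert (HB4 : 0 <= B4).
  { unfold B4. pose proof (Rpower_pos' rhob g). pose proof (Rpower_pos' (2*rhob) g).
    apply Rmult_le_pos. left; apply Rinv_0_lt_compat; lra. nra. }
  assert (HM7 : 0 <= Rabs M7) by apply Rabs_pos.
  assert (HN0 : 0 <= N0) by (unfold N0, Lam; lra).
  assert (HK : 0 <= K) by (unfold K; apply Rmult_le_pos; [lra|]; left; apply Rinv_0_lt_compat; nra).
  assert (HCst : 0 <= Cst).
  { unfold Cst. apply Rplus_le_le_0_compat; auto. apply Rmult_le_pos; [unfold Lam; lra|].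
    left; apply Rinv_0_lt_compat; lra. }
  set (Lmax := Rmin (r0 / 4) (Rmin 1 (1 / (2 * Cst + 1)))).
  assert (HLm1 : Lmax <= r0 / 4) by apply Rmin_l.
  assert (HLm2 : Lmax <= 1) by (eapply Rle_trans; [apply Rmin_r|apply Rmin_l]).
  assert (HLm3 : Lmax <= 1 / (2 * Cst + 1)) by (eapply Rle_trans; [apply Rmin_r|apply Rmin_r]).
  assert (HLm0 : 0 < Lmax).
  { unfold Lmax. apply Rmin_glb_lt; [lra|]. apply Rmin_glb_lt; [lra|]. apply Rdiv_lt_0_compat; lra. }
  exists (Rmax ((r0 + r1) / 2) (r1 - Lmax)). split.
  { split. eapply Rlt_le_trans; [|apply Rmax_l]; lra. apply Rmax_lub_lt; lra. }
  intros rb Hrb p rho u Hbs.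
  assert (Hrb1 : (r0 + r1) / 2 < rb) by (eapply Rle_lt_trans; [apply Rmax_l|apply Hrb]).
  assert (Hrb2 : r1 - Lmax < rb) by (eapply Rle_lt_trans; [apply Rmax_r|apply Hrb]).
  set (L := r1 - rb).
  assert (HL : 0 < L < Lmax) by (unfold L; lra).
  pose proof (bg_bounds r0 r1 g rb pb rhob ts p rho u ltac:(lra) ltac:(lra) ltac:(fold L; lra)
     Hg Hpb Hrhob ltac:(lra) Hbs) as Hbg.
  destruct Hbs as [p' [rho' [u' [Hp [Hrho [Hu [Hode [Hpb' [Hrhob' [Hu0' Hu0sq']]]]]]]]]].
  assert (Hurb : u rb = u0).
  { unfold u0. rewrite Hpb', Hrhob' in Hu0sq'. fold c2b in Hu0sq'. rewrite <- Hu0sq'.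
    simpl. rewrite Rmult_1_r. rewrite sqrt_square; lra. }
  assert (Hmu7 : mu7 g rb ts p rho u = M7).
  { unfold mu7, mu0, mu6. cbv zeta. rewrite Hurb, Hpb', Hrhob'. reflexivity. }
  set (A := 2 * ts * c2b * ((g - 1) * ts + 1) * rb / u0).
  assert (Hmu9 : mu9 g rb p rho u = - A).
  { unfold mu9, mu0, mu2, mu5. cbv zeta. rewrite Hurb, Hpb', Hrhob'. fold c2b. unfold A.
    rewrite Hu0sq. unfold c2b, csq. field. assert (0 < g * pb) by nra. repeat split; try lra. intro; nra. }
  assert (HAA0 : A0 <= A).
  { unfold A, A0. unfold Rdiv. apply Rmult_le_compat_r; [left; apply Rinv_0_lt_compat; lra|].
    assert (0 < 2 * ts * c2b) by nra. assert (0 <= (g - 1) * ts) by nra. assert (r0 <= ((g - 1) * ts + 1) * rb) by nra.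
    replace (2 * ts * c2b * ((g - 1) * ts + 1) * rb) with ((2 * ts * c2b) * (((g - 1) * ts + 1) * rb)) by ring.
    apply Rmult_le_compat_l; lra. }
  assert (HApos : 0 < A) by lra.
  assert (Hco : forall y, 0 <= y <= 1 ->
     r0 ^ 2 / 2 <= e1 g p rho u (L * y + rb) /\
     Rabs (e2 g p rho u (L * y + rb)) <= B2 /\
     Rabs (e3 g p rho u (L * y + rb)) <= B3 /\
     Rabs (e4 g rb ts p rho u (L * y + rb)) <= B4).
  { intros y Hy. assert (Hry : rb <= L * y + rb <= r1) by (unfold L; nra).
    destruct (Hbg _ Hry) as [Ht Hrh].
    unfold e1, e2, e3, e4. cbv zeta.
    set (t := tfun g p rho u (L * y + rb)) in *.
    assert (Ht' : 0 <= t <= 1/2) by lra.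
    split; [|split; [|split]].
    - assert (r0 ^ 2 <= (L * y + rb) ^ 2) by (apply pow_incr; lra). nra.
    - apply e2_bd; auto; lra.
    - apply e3_bd; auto.
    - rewrite Hrhob'. apply e4_bd; auto; lra. }
  unfold S_condition. cbv zeta. fold L.
  intros n [v [v1 [v2 [Hv [Hv1 [Heq [H0 [H1 Hs]]]]]]]].
  rewrite Hmu7, Hmu9 in Hs.
  replace (- ((lam n + M7) / - A) * L) with ((lam n + M7) / A * L) in Hs by (field; lra).
  assert (Hlam : 0 <= lam n) by (unfold lam; pose proof (pos_INR n); nra).
  assert (Hc1 := deriv_cont _ _ _ _ Hv1).
  destruct (Rle_or_lt Lam (lam n)) as [Hbig|Hsmall].
  -
    assert (Hv10 : 0 < v1 0).
    { rewrite Hs. apply Rmult_lt_0_compat; [|lra]. apply Rdiv_lt_0_compat; [|lra].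
      pose proof (Rle_abs (- M7)). rewrite Rabs_Ropp in H. unfold Lam in Hbig. lra. }
    assert (Hpos : forall y, 0 <= y <= 1 -> 0 < v1 y).
    { intros y Hy. destruct (Rlt_or_le 0 (v1 y)) as [|Hle]; auto. exfalso.
      destruct (first_hit 0 1 (fun y => - v1 y) 0 ltac:(lra) (cont_opp _ _ _ Hc1) ltac:(cbv beta; lra))
        as [c [Hc [Hvc Hbef]]].
      { exists y; split; auto; lra. }
      cbv beta in Hvc, Hbef.
      assert (Hvc1 : 1 <= v c).
      { pose proof (mvi_low 0 c v v1 0 (deriv_restrict 0 1 0 c v v1 Hv ltac:(lra) ltac:(lra))) as M.
        specialize (M ltac:(intros x Hx; destruct (Req_dec x c) as [->|]; [lra|];
           specialize (Hbef x ltac:(lra)); lra) c ltac:(lra)). lra. }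
      assert (Hd : deriv_on 0 1 (fun y => 0 + -1 * v1 y) (fun y => 0 + -1 * v2 y)).
      { apply deriv_lin; auto. apply deriv_cst. }
      pose proof (left_max 0 1 _ _ c Hd Hc ltac:(intros s Hs'; specialize (Hbef s Hs'); lra)) as Hlm.
      cbv beta in Hlm.
      destruct (Hco c ltac:(lra)) as [He1 [He2 [He3 He4]]].
      specialize (Heq c ltac:(lra)). cbv beta in Heq.
      replace (v1 c) with 0 in Heq by lra.
      apply (large_contra (e1 g p rho u (L * c + rb)) (e2 g p rho u (L * c + rb))
        (e3 g p rho u (L * c + rb)) (e4 g rb ts p rho u (L * c + rb)) L (lam n) (v c) (v2 c) B3 B4);
        auto; try lra.
      all: try (assert (0 < r0 ^ 2) by (apply pow_lt; lra); lra). unfold Lam in Hbig; lra. }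
    pose proof (mvi_low 0 1 v v1 0 Hv ltac:(intros x Hx; left; apply Hpos; auto) 1 ltac:(lra)).
    lra.
  -
    assert (HLC : L * Cst < 1/2).
    { assert (L * (2 * Cst + 1) < 1).
      { apply Rlt_le_trans with (Lmax * (2 * Cst + 1)). apply Rmult_lt_compat_r; lra.
        apply Rle_trans with (1 / (2 * Cst + 1) * (2 * Cst + 1)). apply Rmult_le_compat_r; lra.
        right; field; lra. }
      lra. }
    assert (Hv10 : Rabs (v1 0) <= L * ((Lam + Rabs M7) / A0)).
    { rewrite Hs. rewrite Rabs_mult, (Rabs_right L) by lra. rewrite Rmult_comm.
      apply Rmult_le_compat_l; [lra|]. unfold Rdiv. rewrite Rabs_mult, (Rabs_right (/ A))
        by (left; apply Rinv_0_lt_compat; lra).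
      apply Rmult_le_compat.
      apply Rabs_pos. left; apply Rinv_0_lt_compat; lra.
      eapply Rle_trans. apply Rabs_triang. rewrite (Rabs_right (lam n)) by lra. lra.
      apply Rinv_le_contravar; lra. }
    assert (HLK : L * K + L * ((Lam + Rabs M7) / A0) < 1/2) by (unfold Cst in HLC; lra).
    assert (HLK0 : 0 <= L * K) by (apply Rmult_le_pos; lra).
    assert (Hsm : forall y, 0 <= y <= 1 -> Rabs (v1 y) < 1/2).
    { intros y Hy. destruct (Rlt_or_le (Rabs (v1 y)) (1/2)) as [|Hle]; auto. exfalso.
      destruct (first_hit 0 1 (fun y => Rabs (v1 y)) (1/2) ltac:(lra) (cont_abs _ _ _ Hc1) ltac:(cbv beta; lra))
        as [c [Hc [Hvc Hbef]]].
      { exists y; split; auto. }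
      cbv beta in Hvc, Hbef.
      assert (Hb1 : forall x, 0 <= x <= c -> Rabs (v1 x) <= 1/2).
      { intros x Hx. destruct (Req_dec x c) as [->|]; [lra|]. specialize (Hbef x ltac:(lra)); lra. }
      assert (Hdv : deriv_on 0 c v v1) by (apply (deriv_restrict 0 1); auto; lra).
      assert (Hdv1 : deriv_on 0 c v1 v2) by (apply (deriv_restrict 0 1); auto; lra).
      assert (Hvb : forall x, 0 <= x <= c -> Rabs (v x) <= 3/2).
      { intros x Hx.
        pose proof (mvi_up 0 c v v1 (1/2) Hdv ltac:(intros z Hz; pose proof (abs_bounds _ _ (Hb1 z Hz)); lra) x Hx).
        pose proof (mvi_low 0 c v v1 (-(1/2)) Hdv ltac:(intros z Hz; pose proof (abs_bounds _ _ (Hb1 z Hz)); lra) x Hx).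
        apply Rabs_le. split; nra. }
      assert (Hv2b : forall x, 0 <= x <= c -> Rabs (v2 x) <= L * K).
      { intros x Hx. destruct (Hco x ltac:(lra)) as [He1 [He2 [He3 He4]]].
        specialize (Heq x ltac:(lra)). cbv beta in Heq.
        unfold K, N0. eapply v2_bound; eauto; try lra. }
      pose proof (mvi_up 0 c v1 v2 (L * K) Hdv1 ltac:(intros z Hz; pose proof (abs_bounds _ _ (Hv2b z Hz)); lra) c ltac:(lra)).
      pose proof (mvi_low 0 c v1 v2 (- (L * K)) Hdv1 ltac:(intros z Hz; pose proof (abs_bounds _ _ (Hv2b z Hz)); lra) c ltac:(lra)).
      apply abs_bounds in Hv10.
      assert (L * K * (c - 0) <= L * K) by nra.
      assert (Rabs (v1 c) < 1/2) by (apply Rabs_def1; nra).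
      lra. }
    pose proof (mvi_low 0 1 v v1 (-(1/2)) Hv
      ltac:(intros x Hx; pose proof (abs_bounds _ _ (Rlt_le _ _ (Hsm x Hx))); lra) 1 ltac:(lra)).
    lra.
Qed.
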